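(* Suppose the neighbor graph $\mathbb N$ (no self-arcs, $m\ge2$ vertices) is strongly connected and $\chi(\mathbb N)\le n$, where $\chi(\mathbb N)=\min_{\mathrm D}\max_{\mathbb E\in\mathrm D} l(\mathbb E)$, the minimum being over all ear decompositions $\mathrm D$ of $\mathbb N$ and $l(\mathbb E)$ the number of arcs in ear $\mathbb E$. Then there exist matrices $C_{ji}$ (one per arc, each with $n$ columns) with $\ker C_{ji}\ne 0$ for every arc $(j,i)$ such that $\bar{\mathbb N}$ is well-configured.
   Context: Setup: $m$ agents labeled $1,\dots,m$ with states $x_i\in\mathbb R^n$; neighbor graph $\mathbb N$ is a directed graph on $\{1,\dots,m\}$ without self-arcs; each arc $(j,i)$ carries a real matrix $C_{ji}$ with $n$ columns; $\bar{\mathbb N}$ denotes $\mathbb N$ with these matrices. $\bar{\mathbb N}$ is well-configured if for all $x_1,\dots,x_m\in\mathbb R^n$, $C_{ji}x_i=C_{ji}x_j$ for every arc $(j,i)$ implies $x_1=\cdots=x_m$. A directed path is a subgraph with distinct vertices $v_0,\dots,v_k$ ($k\ge1$) and arcs $(v_{r-1},v_r)$; its end-vertices are $v_0,v_k$. A directed cycle is a subgraph with distinct vertices $v_1,\dots,v_k$ ($k\ge 2$) and arcs $(v_r,v_{r+1})$, $r<k$, and $(v_k,v_1)$. An ear decomposition of a directed graph $\mathbb G$ is a sequence of subgraphs $\mathbb E_0,\dots,\mathbb E_p$ such that $\mathbb E_0$ is a directed cycle, each $\mathbb E_i$ ($i\ge1$) is a directed path or directed cycle, the $\mathbb E_i$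 are pairwise arc-disjoint with union $\mathbb G$, and for $i\ge1$: a cycle $\mathbb E_i$ has exactly one vertex in common with $\bigcup_{k<i}\mathbb E_k$, and a path $\mathbb E_i$ has its two end-vertices as the only vertices in common with $\bigcup_{k<i}\mathbb E_k$. A strongly connected graph with at least two vertices has at least one ear decomposition. *)

(* Defs.v *)
From HB Require Import structures.
From mathcomp Require Import all_boot all_order all_algebra.
From mathcomp Require Export reals.
Set Implicit Arguments. Unset Strict Implicit. Unset Printing Implicit Defensive.
Import Order.TTheory GRing.Theory Num.Theory.

(* Directed graph on vertices 'I_m : [E j i] means there is an arc (j,i). *)

(* An ear: a directed path given by its distinct vertices v_0,...,v_k (k>=1),
   or a directed cycle given by its distinct vertices v_1,...,v_k (k>=2). *)
Inductive ear (m : nat) :=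
  | EarPath of seq 'I_m
  | EarCycle of seq 'I_m.

Definition ear_verts m (e : ear m) : seq 'I_m :=
  match e with EarPath s => s | EarCycle s => s end.

Definition ear_arcs m (e : ear m) : seq ('I_m * 'I_m) :=
  match e with
  | EarPath s => zip s (behead s)
  | EarCycle s => match s with [::] => [::] | v :: t => zip s (rcons t v) end
  end.

Definition ear_wf m (e : ear m) : bool :=
  uniq (ear_verts e) && (2 <= size (ear_verts e)).

Definition ear_length m (e : ear m) : nat := size (ear_arcs e).

Definition is_cycle_ear m (e : ear m) : bool :=
  if e is EarCycle _ then true else false.

Definition ear_attached m (prev : seq 'I_m) (e : ear m) : Prop :=
  match e with
  | EarCycle s => exists v, forall w, (w \in s) && (w \in prev) = (w == v)
  | EarPath s => forall w, (w \in s) && (w \in prev) =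
                   (w == head w s) || (w == last w s)
  end.

Definition ear0 m : ear m := EarPath [::].

Definition is_ear_decomposition m (E : rel 'I_m) (D : seq (ear m)) : Prop :=
  [/\ (if D is e0 :: _ then is_cycle_ear e0 else false),
      all (@ear_wf m) D,
      (forall i j, i < j < size D ->
         ~~ has (fun a => a \in ear_arcs (nth (ear0 m) D j))
                (ear_arcs (nth (ear0 m) D i))),
      (forall u v, E u v <-> (exists2 i, i < size D & (u, v) \in ear_arcs (nth (ear0 m) D i))) /\
      (forall v, exists2 i, i < size D & v \in ear_verts (nth (ear0 m) D i))
    & (forall i, 0 < i < size D ->
         ear_attached (flatten (map (@ear_verts m) (take i D)))
                      (nth (ear0 m) D i))].

(* chi(N) <= n, where chi(N) = min over ear decompositions D of the maximal
   ear length in D (the minimum is attained, so this is equivalent to the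
   existence of a decomposition all of whose ears have length <= n). *)
Definition chi_le m (E : rel 'I_m) (n : nat) : Prop :=
  exists2 D, is_ear_decomposition E D & all (fun e => ear_length e <= n) D.

Definition well_configured (R : realType) m n (E : rel 'I_m)
    (k : 'I_m -> 'I_m -> nat) (C : forall j i : 'I_m, 'M[R]_(k j i, n)) : Prop :=
  forall x : 'I_m -> 'cV[R]_n,
    (forall j i, E j i -> (C j i *m x i = C j i *m x j)%R) ->
    forall i j, x i = x j.

(* Main.v *)
Require Import Defs.
From HB Require Import structures.
From mathcomp Require Import all_boot all_order all_algebra reals.
Import Order.TTheory GRing.Theory Num.Theory.


Lemma mem_zip2 (S T : eqType) (s : seq S) (t : seq T) u v :
  (u, v) \in zip s t -> v \in t.
Proof.
elim: s t => [|x s IH] [|y t]; rewrite ?in_nil // [zip _ _]/= in_cons => /orP[/eqP[_ ->]|/IH].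
  by rewrite eqxx.
by move=> ->; rewrite orbT.
Qed.

Lemma zip_rcons_l (S T : Type) (s : seq S) (t : seq T) x :
  size s = size t -> zip s t = zip (rcons s x) t.
Proof. by elim: s t => [|y s IH] [|z t] //= [/IH ->]. Qed.

Section G.
Variables (T : eqType) (U : Type) (good : pred (T * T)) (g : T -> U).

Lemma ztail (x0 y : T) p a : a \in zip (y :: p) p -> a \in zip (x0 :: y :: p) (y :: p).
Proof. by move=> h; rewrite [zip _ _]/= in_cons h orbT. Qed.
Arguments ztail x0 {y p a}.

Lemma zhead (x0 y : T) p : (x0, y) \in zip (x0 :: y :: p) (y :: p).
Proof. by rewrite [zip _ _]/= in_cons eqxx. Qed.

Lemma all_good_path p x0 :
  (forall a, a \in zip (x0 :: p) p -> good a -> g a.1 = g a.2) ->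
  (forall a, a \in zip (x0 :: p) p -> good a) ->
  forall w, w \in x0 :: p -> g w = g (last x0 p).
Proof.
elim: p x0 => [|y p IH] x0 hp hg w.
  by rewrite in_cons in_nil orbF => /eqP ->.
have h0 : g x0 = g y by apply: (hp (x0, y) (zhead _ _ _)); apply: hg; apply: zhead.
have IH' := IH y (fun a ha => hp a (ztail x0 ha)) (fun a ha => hg a (ztail x0 ha)).
rewrite in_cons => /orP[/eqP ->|hw] /=; last exact: IH'.
by rewrite h0; apply: IH'; rewrite in_cons eqxx.
Qed.

Lemma path_split p x0 : uniq p ->
  (forall a, a \in zip (x0 :: p) p -> good a -> g a.1 = g a.2) ->
  (forall a b, a \in zip (x0 :: p) p -> b \in zip (x0 :: p) p ->
     ~~ good a -> ~~ good b -> a = b) ->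
  forall w, w \in x0 :: p -> g w = g x0 \/ g w = g (last x0 p).
Proof.
elim: p x0 => [|y p IH] x0 hu hp h1 w.
  by rewrite in_cons in_nil orbF => /eqP ->; left.
move: (hu); rewrite cons_uniq => /andP[ynp up].
case hgood: (good (x0, y)).
  have h0 : g x0 = g y by apply: (hp (x0, y) (zhead _ _ _)).
  have IH' := IH y up (fun a ha => hp a (ztail x0 ha))
     (fun a b ha hb => h1 a b (ztail x0 ha) (ztail x0 hb)).
  rewrite in_cons => /orP[/eqP ->|hw] /=; first by left.
  by rewrite h0; apply: IH'.
have hall : forall a, a \in zip (y :: p) p -> good a.
  move=> [a1 a2] ha; apply/negPn/negP => hb.
  have := h1 _ _ (ztail x0 ha) (zhead x0 y p) hb (negbT hgood).
  case=> _ e2; move: ha; rewrite e2 => /mem_zip2 hy.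
  by rewrite hy in ynp.
rewrite in_cons => /orP[/eqP ->|hw] /=; first by left.
right; apply: (all_good_path _ _ _ hall _ hw) => a ha; exact: hp a (ztail x0 ha).
Qed.

Lemma cycle_const v tl : uniq (v :: tl) ->
  (forall a, a \in zip (v :: tl) (rcons tl v) -> good a -> g a.1 = g a.2) ->
  (forall a b, a \in zip (v :: tl) (rcons tl v) -> b \in zip (v :: tl) (rcons tl v) ->
     ~~ good a -> ~~ good b -> a = b) ->
  forall w, w \in v :: tl -> g w = g v.
Proof.
have ez : zip (v :: tl) (rcons tl v) = zip (v :: rcons tl v) (rcons tl v).
  rewrite -[v :: rcons tl v]/(rcons (v :: tl) v); apply: zip_rcons_l.
  by rewrite /= size_rcons.
rewrite ez => hu hp h1 w hw.
have hu' : uniq (rcons tl v) by rewrite rcons_uniq; move: hu; rewrite cons_uniq.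
have hw' : w \in v :: rcons tl v.
  by move: hw; rewrite !in_cons mem_rcons in_cons => /orP[->|->] //; rewrite !orbT.
by case: (path_split _ _ hu' hp h1 _ hw') => ->; rewrite ?last_rcons.
Qed.
End G.

Lemma find_arc m (D : seq (ear m)) r a :
  (forall i j, i < j < size D ->
         ~~ has (fun a => a \in ear_arcs (nth (ear0 m) D j))
                (ear_arcs (nth (ear0 m) D i))) ->
  r < size D -> a \in ear_arcs (nth (ear0 m) D r) ->
  find (fun e => a \in ear_arcs e) D = r.
Proof.
move=> hdis hr ha.
case: (ltngtP (find (fun e => a \in ear_arcs e) D) r) => // h.
- have hh : has (fun e => a \in ear_arcs e) D by apply/(has_nthP (ear0 m)); exists r.
  have := nth_find (ear0 m) hh => /= hf.
  exfalso; apply: (negP (hdis _ _ (introT andP (conj h hr)))).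
  by apply/hasP; exists a.
- by have := before_find (ear0 m) h; rewrite /= ha.
Qed.

Arguments find_arc {m D r a}.
Local Open Scope ring_scope.
Lemma mxlem (R : realType) n (L : nat) (y : 'cV[R]_n) (t : 'I_n) :
  ((\matrix_(a < n, b < n) (((a == b) && (nat_of_ord a != L))%:R : R)) *m y) t 0
  = ((nat_of_ord t != L)%:R : R) * y t 0.
Proof.
rewrite mxE (bigD1 t) //= big1 ?addr0; first by rewrite mxE eqxx.
by move=> b hb; rewrite mxE eq_sym (negbTE hb) mul0r.
Qed.

Local Open Scope ring_scope.

Theorem corollary5 (R : realType) (m n : nat) (E : rel 'I_m) :
  (2 <= m)%N ->
  irreflexive E ->
  (forall i j : 'I_m, connect E i j) ->
  chi_le E n ->
  exists k : 'I_m -> 'I_m -> nat,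
  exists C : forall j i : 'I_m, 'M[R]_(k j i, n),
    (forall j i, E j i -> exists2 v : 'cV[R]_n, v != 0 & C j i *m v = 0) /\
    well_configured E C.
Proof.
move=> _ _ _ [D [hcyc hwf hdis [hE hcov] hatt] hlen].
pose lab (j i : 'I_m) := index (j,i) (ear_arcs (nth (ear0 m) D
   (find (fun e => (j,i) \in ear_arcs e) D))).
have labE : forall r a, (r < size D)%N -> a \in ear_arcs (nth (ear0 m) D r) ->
    lab a.1 a.2 = index a (ear_arcs (nth (ear0 m) D r)).
  by move=> r [j i] hr ha; rewrite /lab /= (find_arc hdis hr ha).
have lablt : forall j i, E j i -> (lab j i < n)%N.
  move=> j i /hE [r hr ha]; rewrite (labE r (j,i) hr ha).
  have := (all_nthP (ear0 m) hlen) r hr; rewrite /ear_length.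
  by apply: leq_trans; rewrite index_mem.
exists (fun _ _ => n).
exists (fun j i => \matrix_(a < n, b < n) (((a == b) && (nat_of_ord a != lab j i))%:R : R)).
split.
  move=> j i hji; have hl := lablt j i hji.
  exists (\col_(a < n) ((nat_of_ord a == lab j i)%:R : R)).
    apply/negP => /eqP /matrixP /(_ (Ordinal hl) 0); rewrite !mxE eqxx => /eqP.
    by rewrite oner_eq0.
  apply/matrixP => a b; rewrite mxE [RHS]mxE; apply: big1 => c _; rewrite !mxE.
  case: (eqVneq a c) => [<-|] /=; last by rewrite mul0r.
  by case: eqP => _ /=; rewrite ?mul0r ?mulr0.
move=> x hx.
suff key : forall t : 'I_n, exists c, forall w, x w t 0 = c.
  move=> w1 w2; apply/matrixP => t b; rewrite (ord1 b).
  by have [c hc] := key t; rewrite !hc.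
move=> t.
pose good (a : 'I_m * 'I_m) := (nat_of_ord t != lab a.1 a.2).
pose g w := x w t 0.
have hprop : forall r a, (r < size D)%N -> a \in ear_arcs (nth (ear0 m) D r) ->
    good a -> g a.1 = g a.2.
  move=> r [u v] hr ha; rewrite /good /g /= => hg.
  have huv : E u v by apply/hE; exists r.
  have := congr1 (fun M : 'M[R]_(n, 1) => M t 0) (hx u v huv); rewrite /= !mxlem hg /= !mul1r.
  by move=> ->.
have hone : forall r a b, (r < size D)%N -> a \in ear_arcs (nth (ear0 m) D r) ->
    b \in ear_arcs (nth (ear0 m) D r) -> ~~ good a -> ~~ good b -> a = b.
  move=> r a b hr ha hb; rewrite /good !negbK (labE r a hr ha) (labE r b hr hb).
  move=> /eqP ea /eqP eb; apply: (@index_inj _ a _ a b ha hb).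
  by rewrite -ea -eb.
have [v [tl hD0]] : exists v tl, nth (ear0 m) D 0 = EarCycle (v :: tl).
  clear -hcyc hwf; move: hcyc hwf; case: D => [|e0 D'] //=.
  case: e0 => // s _ /andP[]; rewrite /ear_wf /=; case: s => [|v tl] //= _ _.
  by exists v, tl.
have h0 : (0 < size D)%N by move: hcyc; case: (D).
have hcyc0 : forall w, w \in v :: tl -> g w = g v.
  apply: (@cycle_const _ _ good g).
  - by have := (all_nthP (ear0 m) hwf) 0%N h0; rewrite hD0 /ear_wf /= => /andP[].
  - by move=> a ha; apply: (hprop 0%N a h0); rewrite hD0.
  - by move=> a b ha hb; apply: (hone 0%N a b h0); rewrite hD0.
have hear : forall r, (0 < r < size D)%N ->
    (forall w, w \in flatten (map (@ear_verts m) (take r D)) -> g w = g v) ->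
    forall w, w \in ear_verts (nth (ear0 m) D r) -> g w = g v.
  move=> r hr0 hprev; have hat := hatt r hr0.
  have hr : (r < size D)%N by case/andP: hr0.
  have hw := (all_nthP (ear0 m) hwf) r hr.
  have hpr := hprop r; have hon := hone r.
  move: hat hw hpr hon; case: (nth (ear0 m) D r) => s.
  - case: s => [|x0 p]; first by rewrite /ear_wf.
    move=> hat /andP[hu _] hpr hon w hw.
    have hx0 : x0 \in flatten (map (@ear_verts m) (take r D)).
      by move: (hat x0); rewrite /= mem_head eqxx.
    have hxl : last x0 p \in flatten (map (@ear_verts m) (take r D)).
      by move: (hat (last x0 p)); rewrite /= mem_last eqxx orbT.
    have hu' : uniq p by move: hu; rewrite cons_uniq => /andP[].
    case: (@path_split _ _ good g _ _ hu'
       (fun a ha => hpr a hr ha) (fun a b ha hb => hon a b hr ha hb) w hw) => ->;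
      exact: hprev.
  - case: s => [|v' tl']; first by rewrite /ear_wf.
    move=> [u hu] /andP[huq _] hpr hon w hw.
    have := hu u; rewrite eqxx => /andP[hus hup].
    have hc := @cycle_const _ _ good g _ _ huq
       (fun a ha => hpr a hr ha) (fun a b ha hb => hon a b hr ha hb).
    by rewrite (hc w hw) -(hc u hus); exact: hprev.
have hall : forall i, (i <= size D)%N ->
    forall w, w \in flatten (map (@ear_verts m) (take i D)) -> g w = g v.
  elim=> [|i IH] hi w; first by rewrite take0.
  rewrite (take_nth (ear0 m)) // map_rcons flatten_rcons mem_cat => /orP[hw|hw].
    exact: IH (ltnW hi) w hw.
  case: (posnP i) => [i0|ipos].
    by move: hw; rewrite i0 hD0; exact: hcyc0.
  by apply: (hear i _ (IH (ltnW hi)) w hw); rewrite ipos.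
exists (g v) => w.
have [r hr hw] := hcov w.
apply: (hall (size D) (leqnn _)); rewrite take_size.
apply/flattenP; exists (ear_verts (nth (ear0 m) D r)) => //.
by rewrite -(nth_map (ear0 m) [::]) //; apply: mem_nth; rewrite size_map.
Qed.
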